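(* Let $\theta\in k$ and let $(A,R)$ be a Rota--Baxter algebra of weight $\theta$. For all $b_1,\ldots,b_n\in A$, $$ \sum_{\sigma\in S_n}R\Big(\cdots R\big(R(b_{\sigma(1)})b_{\sigma(2)}\big)\cdots\Big)b_{\sigma(n)}=\sum_{\{P_1,\ldots,P_k\}}b_{P_1}\ast_\theta\cdots\ast_\theta b_{P_k}, $$ where the sum runs over all set partitions $\{P_1,\ldots,P_k\}$ of $\{1,\ldots,n\}$ with blocks indexed so that $\max P_1<\cdots<\max P_k$, and for a block $P_i=\{p_1<\cdots<p_h\}$, $$ b_{P_i}:=\sum_{\sigma\in S_{h-1}}\Big(\cdots\big((b_{p_h}\triangleright_\theta b_{p_{\sigma(h-1)}})\triangleright_\theta b_{p_{\sigma(h-2)}}\big)\cdots\triangleright_\theta b_{p_{\sigma(2)}}\Big)\triangleright_\theta b_{p_{\sigma(1)}} $$ (for $h=1$, $b_{P_i}=b_{p_1}$).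
   Context: $k$ is a field of characteristic zero. A Rota--Baxter algebra of weight $\theta$ is a unital associative algebra $A$ with a linear map $R:A\to A$ such that $R(x)R(y)=R(R(x)y+xR(y))+\theta R(xy)$ for all $x,y\in A$. Define $a\triangleright_\theta b:=R(a)b-bR(a)-\theta ba$ and the (associative) double product $a\ast_\theta b:=R(a)b+aR(b)+\theta ab$. *)

(* Defs.v *)
From HB Require Import structures.
From mathcomp Require Import all_boot all_order all_algebra all_fingroup.
Set Implicit Arguments. Unset Strict Implicit. Unset Printing Implicit Defensive.
Import GRing.Theory.
Local Open Scope ring_scope.

Section RB.
Variables (F : fieldType) (A : algType F).

Definition is_rota_baxter (theta : F) (R : A -> A) : Prop :=
  forall x y : A, R x * R y = R (R x * y + x * R y) + theta *: R (x * y).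

Definition rb_tri (theta : F) (R : A -> A) (a b : A) : A :=
  R a * b - b * R a - theta *: (b * a).

Definition rb_star (theta : F) (R : A -> A) (a b : A) : A :=
  R a * b + a * R b + theta *: (a * b).

Definition rb_word (R : A -> A) (s : seq A) : A :=
  match s with
  | [::] => 0
  | c :: s' => foldl (fun acc x => R acc * x) c s'
  end.

(* Left-bracketed product x1 *_theta x2 *_theta ... *_theta xk
   (the double product is associative, so the bracketing is immaterial). *)
Definition star_prod (theta : F) (R : A -> A) (s : seq A) : A :=
  match s with
  | [::] => 0
  | c :: s' => foldl (rb_star theta R) c s'
  end.

Variable n : nat.

Definition block_elems (B : {set 'I_n}) : seq 'I_n :=
  sort (fun i j : 'I_n => (val i <= val j)%N) (enum B).

Definition block_max (B : {set 'I_n}) : nat := \max_(i in B) val i.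

(* b_P for a block P = {p_1 < ... < p_h}:
   sum over sigma in S_{h-1} of
   (((b_{p_h} |> b_{p_sigma(h-1)}) |> b_{p_sigma(h-2)}) ...) |> b_{p_sigma(1)}.
   (0-indexed: qb`_i = b_{p_{i+1}}.) *)
Definition block_term (theta : F) (R : A -> A) (b : 'I_n -> A)
    (B : {set 'I_n}) : A :=
  let qb := [seq b i | i <- block_elems B] in
  let h := size qb in
  \sum_(s : 'S_(h.-1))
     foldl (rb_tri theta R) (last 0 qb)
           [seq qb`_(s j) | j <- rev (enum 'I_(h.-1))].

Definition sorted_blocks (P : {set {set 'I_n}}) : seq {set 'I_n} :=
  sort (fun B C => (block_max B <= block_max C)%N) (enum P).

Definition rb_lhs (R : A -> A) (b : 'I_n -> A) : A :=
  \sum_(s : 'S_n) rb_word R [seq b (s i) | i <- enum 'I_n].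

Definition rb_rhs (theta : F) (R : A -> A) (b : 'I_n -> A) : A :=
  \sum_(P : {set {set 'I_n}} | partition P [set: 'I_n])
     star_prod theta R [seq block_term theta R b B | B <- sorted_blocks P].

End RB.

(* Main.v *)
Require Import Defs.
From HB Require Import structures.
From mathcomp Require Import all_boot all_order all_algebra all_fingroup.
Import GRing.Theory.
Local Open Scope ring_scope.

Module Aux.
Set Implicit Arguments. Unset Strict Implicit. Unset Printing Implicit Defensive.
Section OSsec.
Variables (T : finType) (V : zmodType).

Definition OS (S : {set T}) (G : seq T -> V) : V :=
  \sum_(t <- permutations (enum S)) G t.

Lemma OS_perm (s1 s2 : seq T) (G : seq T -> V) : perm_eq s1 s2 ->
  \sum_(t <- permutations s1) G t = \sum_(t <- permutations s2) G t.
Proof. by move=> /perm_permutations H; apply: perm_big. Qed.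

Lemma OS0 G : OS set0 G = G [::].
Proof. by rewrite /OS enum_set0 /= big_cons big_nil addr0. Qed.

Lemma OS_rev S G : OS S (fun t => G (rev t)) = OS S G.
Proof.
rewrite /OS -(big_map rev xpredT G); apply: perm_big.
apply: uniq_perm; first by rewrite (map_inj_uniq (inv_inj (@revK _))) permutations_uniq.
  exact: permutations_uniq.
move=> t; rewrite mem_permutations; apply/mapP/idP => [[u]|Ht].
  by rewrite mem_permutations => Hu ->; rewrite perm_rev.
by exists (rev t); rewrite ?revK // mem_permutations perm_rev.
Qed.

Lemma OS_cons S G : S != set0 ->
  OS S G = \sum_(j in S) OS (S :\ j) (fun t => G (j :: t)).
Proof.
move=> S0; rewrite /OS (perm_big _ (permutationsE _)); last first.
  by rewrite -cardE card_gt0.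
rewrite big_allpairs_dep undup_id ?enum_uniq //.
rewrite -big_enum /=.
apply: eq_big_seq => j; rewrite mem_enum => Sj; apply: OS_perm.
apply: uniq_perm; first by rewrite rem_uniq ?enum_uniq.
  exact: enum_uniq.
by move=> x; rewrite mem_rem_uniq ?enum_uniq // inE mem_enum mem_enum !inE.
Qed.

Lemma OS_rcons S G : S != set0 ->
  OS S G = \sum_(j in S) OS (S :\ j) (fun t => G (rcons t j)).
Proof.
move=> S0; rewrite -OS_rev OS_cons //; apply: eq_bigr => j _.
rewrite -OS_rev; apply: eq_bigr => t _; by rewrite rev_cons revK.
Qed.

Lemma OS_Sn k (f : 'I_k -> T) (G : seq T -> V) : injective f ->
  \sum_(s : 'S_k) G [seq f (s i) | i <- enum 'I_k] =
  \sum_(t <- permutations [seq f i | i <- enum 'I_k]) G t.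
Proof.
move=> finj.
pose phi (s : 'S_k) := [seq f (s i) | i <- enum 'I_k].
have phi_inj : injective phi.
  move=> s1 s2 /eq_in_map H; apply/permP => i; apply: finj; apply: H.
  by rewrite mem_enum.
rewrite -[LHS](big_map phi xpredT G) [index_enum _]unlock -enumT.
have Hsub : {subset map phi (enum 'S_k) <= permutations [seq f i | i <- enum 'I_k]}.
  move=> t /mapP[s _ ->]; rewrite mem_permutations /phi.
  rewrite (map_comp f s); apply: perm_map.
  apply: uniq_perm; first by rewrite (map_inj_uniq (@perm_inj _ s)) enum_uniq.
    exact: enum_uniq.
  move=> x; rewrite mem_enum; apply/mapP; exists (s^-1 x)%g; first by rewrite mem_enum.
  by rewrite permKV.
have U1 : uniq (map phi (enum 'S_k)) by rewrite (map_inj_uniq phi_inj) enum_uniq.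
apply: perm_big; apply: uniq_perm => //; first exact: permutations_uniq.
have Hsz : (size (permutations [seq f i | i <- enum 'I_k]) <= size (map phi (enum 'S_k)))%N.
  rewrite size_permutations; last by rewrite (map_inj_uniq finj) enum_uniq.
  by rewrite size_map size_map -!cardE card_ord card_Sn.
by have [_ H] := uniq_min_size U1 Hsub Hsz.
Qed.

End OSsec.

Section RBsec.
Variables (F : fieldType) (A : algType F) (theta : F) (R : {linear A -> A}).
Hypothesis hR : is_rota_baxter theta R.
Variables (n : nat) (b : 'I_n -> A).

Local Notation tri := (rb_tri theta R).

Lemma RB_star x y : R (rb_star theta R x y) = R x * R y.
Proof. by rewrite hR /rb_star linearD linearZ. Qed.

Lemma tri_suml (I : Type) (r : seq I) (G : I -> A) y :
  tri (\sum_(t <- r) G t) y = \sum_(t <- r) tri (G t) y.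
Proof.
by rewrite /rb_tri !sumrB -mulr_suml -mulr_sumr -scaler_sumr -mulr_sumr linear_sum.
Qed.

Lemma tri_add y c : tri y c + c * (R y + theta *: y) = R y * c.
Proof. by rewrite /rb_tri mulrDr -scalerAr -[R y * c - _ - _]addrA -opprD subrK. Qed.

Definition Lw (S : {set 'I_n}) := OS S (fun t => rb_word R (map b t)).
Definition Mw S := if S == set0 then 1 else R (Lw S).

Lemma OS_nonnil S (t : seq 'I_n) : S != set0 -> t \in permutations (enum S) -> t != [::].
Proof.
move=> S0; rewrite mem_permutations => /perm_size; rewrite -cardE.
by case: t => //= H; move: S0; rewrite -card_gt0 -H.
Qed.

Lemma Lw_rec S : Lw S = \sum_(j in S) Mw (S :\ j) * b j.
Proof.
have [->|S0] := eqVneq S set0.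
  by rewrite big_set0 /Lw OS0.
rewrite /Lw (OS_rcons _ S0); apply: eq_bigr => j Sj.
rewrite /Mw; have [->|Sj0] := eqVneq (S :\ j) set0.
  by rewrite OS0 mul1r.
rewrite /Lw /OS linear_sum mulr_suml big_seq [RHS]big_seq /=.
apply: eq_bigr => t Ht; have := OS_nonnil Sj0 Ht.
case: t {Ht} => // x t _.
by rewrite map_rcons /= foldl_rcons.
Qed.


Definition BT (Q : {set 'I_n}) := block_term theta R b Q.
Definition Pw (S : {set 'I_n}) := \sum_(P : {set {set 'I_n}} | partition P S)
   star_prod theta R [seq BT B | B <- sorted_blocks P].
Definition Nw S := if S == set0 then 1 else R (Pw S).
Definition BTs (Q : {set 'I_n}) m := OS (Q :\ m) (fun t => foldl tri (b m) (map b t)).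
Definition ismax (m : 'I_n) (S : {set 'I_n}) :=
  m \in S /\ forall i, i \in S -> (val i <= val m)%N.

Lemma Pw0 : Pw set0 = 0.
Proof.
rewrite /Pw (eq_bigl (fun P => P == set0)) => [|P]; last by rewrite partition_set0.
by rewrite big_pred1_eq /sorted_blocks enum_set0.
Qed.

Lemma block_max_ismax m Q : ismax m Q -> block_max Q = val m.
Proof.
case=> mQ Hm; apply/eqP; rewrite eqn_leq; apply/andP; split.
  by apply/bigmax_leqP => i; exact: Hm.
exact: (leq_bigmax_cond m).
Qed.

Lemma partU1 (S Q : {set 'I_n}) P m : m \in Q -> Q \subset S -> partition P (S :\: Q) ->
  partition (Q |: P) S.
Proof.
move=> mQ QS HP.
have Q0 : Q != set0 by apply/set0Pn; exists m.
have dis : [disjoint Q & S :\: Q].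
  by rewrite -setI_eq0; apply/eqP/setP => x; rewrite !inE; case: (x \in Q); rewrite ?andbF.
have := partitionU1 HP Q0 dis.
have -> // : Q :|: S :\: Q = S.
apply/setP => x; rewrite !inE; case Qx: (x \in Q) => //=.
by rewrite (subsetP QS).
Qed.

Lemma QnotinP (S Q : {set 'I_n}) P m : m \in Q -> partition P (S :\: Q) -> Q \notin P.
Proof.
move=> mQ HP; apply/negP => QP; have := partitionS HP QP.
by move/subsetP/(_ m mQ); rewrite inE mQ.
Qed.

Lemma part_decomp (S : {set 'I_n}) m (f : {set {set 'I_n}} -> A) : m \in S ->
  \sum_(P : {set {set 'I_n}} | partition P S) f P =
  \sum_(Q : {set 'I_n} | (m \in Q) && (Q \subset S))
     \sum_(P : {set {set 'I_n}} | partition P (S :\: Q)) f (Q |: P).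
Proof.
move=> mS.
rewrite (partition_big (fun P : {set {set 'I_n}} => pblock P m) (fun Q : {set 'I_n} => (m \in Q) && (Q \subset S))) /=; last first.
  move=> P HP; have cov := cover_partition HP; rewrite mem_pblock cov mS /=.
  by apply: partitionS HP _; apply: pblock_mem; rewrite cov.
apply: eq_bigr => Q /andP[mQ QS].
rewrite (reindex_onto (fun P => Q |: P) (fun P => P :\ Q)) /=; last first.
  move=> P /andP[HP /eqP <-]; apply: setD1K; apply: pblock_mem.
  by rewrite (cover_partition HP).
apply: eq_bigl => P; apply/idP/idP.
  case/andP=> /andP[HP /eqP Hb] /eqP HPe; rewrite -HPe.
  exact: partitionD1 HP (setU11 _ _).
move=> HP; have nQ := QnotinP mQ HP.
have HU := partU1 mQ QS HP.
rewrite setU1K // eqxx andbT HU /=.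
by rewrite (def_pblock (partition_trivIset HU) (setU11 _ _) mQ).
Qed.


Lemma bmax_elem (B : {set 'I_n}) : B != set0 -> {i0 | i0 \in B & block_max B = val i0}.
Proof. by move=> B0; apply: eq_bigmax_cond; rewrite card_gt0. Qed.

Lemma bmax_inj (D : {set 'I_n}) P B C : partition P D -> B \in P -> C \in P ->
  block_max B = block_max C -> B = C.
Proof.
move=> HP BP CP.
have [i iB ->] := bmax_elem (partition_neq0 HP BP).
have [j jC ->] := bmax_elem (partition_neq0 HP CP).
move=> /val_inj E; rewrite -E in jC.
have tP := partition_trivIset HP.
by rewrite -(def_pblock tP BP iB) -(def_pblock tP CP jC).
Qed.

Lemma sorted_U1 (S Q : {set 'I_n}) P m : ismax m S -> m \in Q -> Q \subset S ->
  partition P (S :\: Q) -> sorted_blocks (Q |: P) = rcons (sorted_blocks P) Q.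
Proof.
move=> [mS Hm] mQ QS HP.
set le := (fun B C : {set 'I_n} => (block_max B <= block_max C)%N).
have HQ : block_max Q = val m.
  by apply: block_max_ismax; split=> // i /(subsetP QS); exact: Hm.
have Hlt : forall B, B \in P -> (block_max B < val m)%N.
  move=> B BP; have B0 := partition_neq0 HP BP; have BS := partitionS HP BP.
  have [i0 iB ->] := bmax_elem B0.
  have := subsetP BS i0 iB; rewrite !inE => /andP[niQ iS].
  rewrite ltn_neqAle Hm // andbT; apply/eqP => /val_inj E.
  by rewrite E mQ in niQ.
have HU := partU1 mQ QS HP.
have letr : transitive le by move=> y x z; apply: leq_trans.
rewrite /sorted_blocks -/le.
rewrite -[RHS](sorted_sort letr); last first.
  case E: (sort le (enum P)) => [|x l] //=.
  rewrite rcons_path; apply/andP; split.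
    by have := sort_sorted (fun x y => leq_total (block_max x) (block_max y)) (enum P); rewrite E.
  rewrite /le HQ ltnW // Hlt //.
  have : last x l \in x :: l by exact: mem_last.
  by rewrite -E mem_sort mem_enum.
apply/perm_sort_inP.
- by move=> x y _ _; exact: leq_total.
- by move=> x y z _ _ _; exact: letr.
- move=> B C; rewrite !mem_enum => BU CU /andP[h1 h2]; apply: (bmax_inj HU) => //.
  by apply/eqP; rewrite eqn_leq; apply/andP.
apply: uniq_perm; first exact: enum_uniq.
  rewrite rcons_uniq sort_uniq enum_uniq andbT mem_sort mem_enum.
  exact: QnotinP mQ HP.
by move=> B; rewrite mem_enum mem_rcons !inE mem_sort mem_enum.
Qed.

Lemma star_prod_rcons (l : seq A) x :
  star_prod theta R (rcons l x) = if l is [::] then x else rb_star theta R (star_prod theta R l) x.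
Proof. by case: l => //= y l; rewrite foldl_rcons. Qed.


Lemma sorted_rcons_le (x : 'I_n) e' l :
  sorted (fun i j : 'I_n => (val i <= val j)%N) (rcons e' l) -> x \in e' -> (val x <= val l)%N.
Proof.
elim: e' => [|y e' IH] //= Hs; rewrite inE => /predU1P[->|xe].
  have := order_path_min (fun a c d => @leq_trans _ _ _) Hs.
  by rewrite all_rcons => /andP[].
by apply: IH => //; apply: path_sorted Hs.
Qed.

Lemma BT_BTs Q m : ismax m Q -> BT Q = BTs Q m.
Proof.
move=> [mQ Hm]; rewrite /BT /block_term /BTs.
have ue : uniq (block_elems Q) by rewrite /block_elems sort_uniq enum_uniq.
have me : block_elems Q =i Q by move=> x; rewrite /block_elems mem_sort mem_enum.
have se : sorted (fun i j : 'I_n => (val i <= val j)%N) (block_elems Q).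
  by apply: sort_sorted => x y; exact: leq_total.
move: ue me se; case/lastP: (block_elems Q) => [|e' l] ue me se.
  by move: (me m); rewrite mQ.
have lm : l = m.
  apply: val_inj; apply/eqP; rewrite eqn_leq Hm -?me ?mem_rcons ?mem_head //=.
  have := me m; rewrite mQ mem_rcons inE => /predU1P[->//|me'].
  exact: sorted_rcons_le se me'.
subst l.
rewrite rcons_uniq in ue; case/andP: ue => nme ue.
rewrite size_map size_rcons /= map_rcons last_rcons.
set k := size e'.
pose f := fun i : 'I_k => nth m e' i.
have finj : injective f.
  by move=> i j /eqP; rewrite /f nth_uniq // => /eqP /val_inj.
transitivity (\sum_(s : 'S_k) (fun t => foldl tri (b m) (map b t))
                (rev [seq f (s i) | i <- enum 'I_k])).
  apply: eq_bigr => s _ /=; congr foldl.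
  rewrite !map_rev; f_equal; rewrite -!map_comp /=; apply: eq_map => j /=.
  by rewrite nth_rcons size_map ltn_ord (nth_map m) ?ltn_ord.
rewrite (OS_Sn (fun t => foldl tri (b m) (map b (rev t))) finj).
have -> : [seq f i | i <- enum 'I_k] = e'.
  by rewrite /f -[RHS](mkseq_nth m) /mkseq -val_enum_ord -map_comp.
rewrite -(OS_rev (Q :\ m)) /OS; apply: OS_perm.
apply: uniq_perm => //; first exact: enum_uniq.
move=> x; rewrite mem_enum !inE -me mem_rcons inE.
by case: eqVneq => [->|]; rewrite ?(negbTE nme).
Qed.


Lemma BTs_rec (Q : {set 'I_n}) m : m \in Q -> BTs Q m =
  (if Q :\ m == set0 then b m else 0) + \sum_(j in Q :\ m) tri (BTs (Q :\ j) m) (b j).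
Proof.
move=> mQ; rewrite /BTs; have [E|Q0] := eqVneq (Q :\ m) set0.
  by rewrite E OS0 big_set0 addr0.
rewrite add0r (OS_rcons _ Q0); apply: eq_bigr => j Hj.
have -> : Q :\ j :\ m = Q :\ m :\ j.
  by apply/setP=> x; rewrite !inE; case: (x == j); case: (x == m).
by rewrite /OS tri_suml; apply: eq_bigr => t _; rewrite map_rcons foldl_rcons.
Qed.

Lemma inner_sum (D : {set 'I_n}) y :
  \sum_(P : {set {set 'I_n}} | partition P D)
     (if D == set0 then y
      else rb_star theta R (star_prod theta R [seq BT B | B <- sorted_blocks P]) y)
  = Nw D * y + Pw D * (R y + theta *: y).
Proof.
rewrite /Nw; have [->|D0] := eqVneq D set0.
  rewrite Pw0 mul0r addr0 mul1r.
  rewrite (eq_bigl (fun P => P == set0)) => [|P]; last by rewrite partition_set0.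
  by rewrite big_pred1_eq.
rewrite /Pw /rb_star !big_split /= -!mulr_suml -scaler_sumr -mulr_suml -linear_sum.
by rewrite mulrDr scalerAr addrA.
Qed.

Lemma Pw_dec S m : ismax m S -> Pw S =
  \sum_(Q : {set 'I_n} | (m \in Q) && (Q \subset S))
     (Nw (S :\: Q) * BTs Q m + Pw (S :\: Q) * (R (BTs Q m) + theta *: BTs Q m)).
Proof.
move=> [mS Hm]; rewrite {1}/Pw (part_decomp _ mS); apply: eq_bigr => Q /andP[mQ QS].
rewrite -BT_BTs; last by split=> // i /(subsetP QS); exact: Hm.
rewrite -inner_sum; apply: eq_bigr => P HP.
rewrite (sorted_U1 (conj mS Hm) mQ QS HP) map_rcons star_prod_rcons.
have [E|D0] := eqVneq (S :\: Q) set0.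
  by move: HP; rewrite E partition_set0 => /eqP ->; rewrite /sorted_blocks enum_set0.
case E2: (sorted_blocks P) => [|B l] //.
exfalso; move: E2; rewrite /sorted_blocks => /(congr1 size); rewrite size_sort -cardE.
move/eqP; rewrite cards_eq0 => /eqP P0; move: HP; rewrite P0 => /cover_partition.
by rewrite /cover big_set0 => E; rewrite -E eqxx in D0.
Qed.

Lemma termR D y : R (Nw D * y + Pw D * (R y + theta *: y)) = Nw D * R y.
Proof.
rewrite /Nw; have [->|D0] := eqVneq D set0; first by rewrite Pw0 mul0r addr0 !mul1r.
by rewrite mulrDr -scalerAr addrA -RB_star.
Qed.

Lemma RPw_dec S m : ismax m S -> R (Pw S) =
  \sum_(Q : {set 'I_n} | (m \in Q) && (Q \subset S)) Nw (S :\: Q) * R (BTs Q m).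
Proof. by move=> Hm; rewrite (Pw_dec Hm) linear_sum; apply: eq_bigr => Q _; exact: termR. Qed.


Lemma RX (S : {set 'I_n}) m (G : {set 'I_n} -> 'I_n -> A) :
  \sum_(Q : {set 'I_n} | (m \in Q) && (Q \subset S)) \sum_(j in Q :\ m) G (Q :\ j) j =
  \sum_(Q : {set 'I_n} | (m \in Q) && (Q \subset S)) \sum_(j in S :\: Q) G Q j.
Proof.
rewrite (exchange_big_dep xpredT) //= [RHS](exchange_big_dep xpredT) //=.
apply: eq_bigr => j _.
rewrite (reindex_onto (fun Q' => j |: Q') (fun Q => Q :\ j)) /=; last first.
  by move=> Q /andP[_]; rewrite inE => /andP[_ jQ]; rewrite setD1K.
have E : forall Q', ((j |: Q') :\ j == Q') = (j \notin Q').
  move=> Q'; apply/eqP/idP => [<-|?]; first by rewrite !inE eqxx.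
  by rewrite setU1K.
apply: eq_big => Q'.
  rewrite E subUset sub1set !inE eqxx /= andbT.
  case: (eqVneq j m) => [->|jm] /=; first by rewrite andbF; case: (m \in Q'); rewrite ?andbF.
  by case: (m \in Q'); case: (j \in Q'); case: (j \in S); case: (Q' \subset S).
by move=> /andP[_ /eqP ->].
Qed.

Lemma EX2 (S : {set 'I_n}) m (K : {set 'I_n} -> 'I_n -> A) :
  \sum_(j in S | j != m) \sum_(Q : {set 'I_n} | (m \in Q) && (Q \subset S :\ j)) K Q j =
  \sum_(Q : {set 'I_n} | (m \in Q) && (Q \subset S)) \sum_(j in S :\: Q) K Q j.
Proof.
rewrite (exchange_big_dep (fun Q : {set 'I_n} => (m \in Q) && (Q \subset S))) /=; last first.
  move=> j Q _ /andP[-> /subset_trans]; apply; exact: subD1set.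
apply: eq_bigr => Q /andP[mQ QS]; apply: eq_bigl => j.
rewrite subsetD1 mQ QS !inE /=.
case: (eqVneq j m) => [->|jm]; first by rewrite mQ /= andbF.
by rewrite andbT; case: (j \in Q); case: (j \in S).
Qed.


Lemma ismax_exists (S : {set 'I_n}) : S != set0 -> exists m, ismax m S.
Proof.
move=> S0; have [m mS Em] := bmax_elem S0; exists m; split=> // i iS.
by rewrite -Em; apply: (leq_bigmax_cond i).
Qed.

Lemma setD_U1 (S Q : {set 'I_n}) j : S :\: (j |: Q) = S :\: Q :\ j.
Proof. by apply/setP => x; rewrite !inE; case: (x == j); case: (x \in Q). Qed.

Lemma setD1_D (S Q : {set 'I_n}) j : S :\ j :\: Q = S :\: Q :\ j.
Proof. by apply/setP => x; rewrite !inE; case: (x == j); case: (x \in Q). Qed.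

Lemma Pw_rec_gen N : forall S : {set 'I_n}, (#|S| <= N)%N ->
  Pw S = \sum_(j in S) Nw (S :\ j) * b j.
Proof.
elim: N => [|N IH] S HS.
  have -> : S = set0 by apply/eqP; rewrite -cards_eq0 -leqn0.
  by rewrite Pw0 big_set0.
have [->|S0] := eqVneq S set0; first by rewrite Pw0 big_set0.
have [m [mS Hm]] := ismax_exists S0.
have Hmax : ismax m S by [].
rewrite (Pw_dec Hmax).
have IHQ : forall Q : {set 'I_n}, m \in Q ->
    Pw (S :\: Q) = \sum_(j in S :\: Q) Nw (S :\: Q :\ j) * b j.
  move=> Q mQ; apply: IH; rewrite -ltnS; apply: leq_trans HS.
  apply: (@leq_trans #|S :\ m|.+1).
    rewrite ltnS; apply: subset_leq_card; apply/subsetP => x; rewrite !inE.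
    by move=> /andP[xQ ->]; rewrite andbT; apply: contraNneq xQ => ->.
  by rewrite (cardsD1 m S) mS.
under eq_bigr => Q /andP[mQ QS] do rewrite (IHQ Q mQ) mulr_suml {1}(BTs_rec mQ) mulrDr mulr_sumr.
rewrite big_split /= big_split /=.
rewrite (bigD1 [set m]) /=; last by rewrite set11 sub1set mS.
rewrite setDv eqxx.
rewrite big1; last first.
  move=> Q /andP[/andP[mQ _] QnM].
  case: eqVneq => [E|]; last by rewrite mulr0.
  by move: QnM; rewrite -(setD1K mQ) E setU0 eqxx.
rewrite addr0.
under eq_bigr => Q /andP[mQ _].
  under eq_bigr => j Hj do rewrite -{1}(setD1K (subsetP (subD1set Q m) j Hj)).
  over.
rewrite (RX S m (fun Q' j => Nw (S :\: (j |: Q')) * tri (BTs Q' m) (b j))).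
rewrite -addrA -big_split /=.
under eq_bigr => Q _ do rewrite -big_split /=.
have HR : \sum_(j in S | j != m) Nw (S :\ j) * b j =
   \sum_(Q : {set 'I_n} | (m \in Q) && (Q \subset S))
      \sum_(j in S :\: Q) Nw (S :\: Q :\ j) * R (BTs Q m) * b j.
  rewrite -EX2; apply: eq_bigr => j /andP[jS jm].
  have Sj0 : S :\ j != set0 by apply/set0Pn; exists m; rewrite !inE eq_sym jm.
  have Hmj : ismax m (S :\ j).
    by split; [rewrite !inE eq_sym jm | move=> i; rewrite inE => /andP[_ /Hm]].
  rewrite /Nw (negbTE Sj0) (RPw_dec Hmj) mulr_suml; apply: eq_bigr => Q _.
  by rewrite setD1_D.
rewrite [RHS](bigD1 m) //= HR; congr (_ + _).
apply: eq_bigr => Q _; apply: eq_bigr => j _.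
by rewrite setD_U1 -mulrA -mulrDr tri_add mulrA.
Qed.

Lemma Pw_rec S : Pw S = \sum_(j in S) Nw (S :\ j) * b j.
Proof. exact: Pw_rec_gen. Qed.

Lemma Lw_Pw_gen N : forall S : {set 'I_n}, (#|S| <= N)%N -> Lw S = Pw S.
Proof.
elim: N => [|N IH] S HS.
  have -> : S = set0 by apply/eqP; rewrite -cards_eq0 -leqn0.
  by rewrite Lw_rec Pw_rec !big_set0.
rewrite Lw_rec Pw_rec; apply: eq_bigr => j jS; congr (_ * _).
rewrite /Mw /Nw IH //; rewrite -ltnS; apply: leq_trans HS.
by rewrite (cardsD1 j S) jS.
Qed.


Lemma main_sec : rb_lhs R b = rb_rhs theta R b.
Proof.
have -> : rb_rhs theta R b = Pw [set: 'I_n] by [].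
rewrite -(Lw_Pw_gen (leqnn _)) /rb_lhs /Lw /OS.
have := OS_Sn (fun t => rb_word R (map b t)) (@inj_id 'I_n).
under eq_bigr => s _ do rewrite -map_comp.
move=> ->; apply: OS_perm; rewrite map_id.
apply: uniq_perm; rewrite ?enum_uniq // => x.
by rewrite enum_setT -enumT.
Qed.

End RBsec.

End Aux.

Theorem corollary3p6 (F : fieldType) (A : algType F)
    (hF : [pchar F] =i pred0)
    (theta : F) (R : {linear A -> A})
    (hR : is_rota_baxter theta R)
    (n : nat) (hn : (0 < n)%N) (b : 'I_n -> A) :
  rb_lhs R b = rb_rhs theta R b.
Proof. exact: (Aux.main_sec hR b). Qed.
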